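(* Let $\mathfrak{g}$ be a complete Lie algebra. Then $\mathrm{HL}^2(\mathfrak{g},\mathfrak{g}_{\mathrm{ad}})\cong\mathrm{H}^2(\mathfrak{g},\mathfrak{g})$ and $\mathrm{HL}^3(\mathfrak{g},\mathfrak{g}_{\mathrm{ad}})\cong\mathrm{H}^3(\mathfrak{g},\mathfrak{g})$.
   Context: A Lie algebra $\mathfrak{g}$ is complete if $\mathrm{H}^0(\mathfrak{g},\mathfrak{g})=\mathrm{H}^1(\mathfrak{g},\mathfrak{g})=0$ (Chevalley–Eilenberg cohomology with adjoint coefficients). $\mathfrak{g}$ is regarded as a left Leibniz algebra with $xy=[x,y]$, and $\mathfrak{g}_{\mathrm{ad}}$ is the (symmetric) Leibniz bimodule $\mathfrak{g}$ with left and right multiplication as actions. $\mathrm{HL}^n(\mathfrak{g},M)$ is the cohomology of $\mathrm{Hom}(\mathfrak{g}^{\otimes n},M)$ with $(\mathrm{d}^nf)(x_1,\dots,x_{n+1})=\sum_{i=1}^n(-1)^{i+1}x_i\cdot f(\dots,\hat{x}_i,\dots)+(-1)^{n+1}f(x_1,\dots,x_n)\cdot x_{n+1}+\sum_{i<j}(-1)^if(x_1,\dots,\hat{x}_i,\dots,x_ix_j,\dots,x_{n+1})$ ($x_ix_j$ in the $j$-th position). *)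

(* Defs.v *)
From HB Require Import structures.
From mathcomp Require Import all_boot all_order all_algebra.
Set Implicit Arguments. Unset Strict Implicit. Unset Printing Implicit Defensive.
Import Order.TTheory GRing.Theory Num.Theory.
Local Open Scope ring_scope.

Definition is_lie_bracket (K : fieldType) (V : lmodType K) (br : V -> V -> V) : Prop :=
  [/\ (forall (a : K) (x y z : V), br (a *: x + y) z = a *: br x z + br y z),
      (forall (a : K) (x y z : V), br z (a *: x + y) = a *: br z x + br z y),
      (forall x : V, br x x = 0) &
      (forall x y z : V, br x (br y z) + br y (br z x) + br z (br x y) = 0)].

Section Cochains.
Variables (K : fieldType) (V : lmodType K) (br : V -> V -> V).

Definition cochain (n : nat) := ('I_n -> V) -> V.

Definition upd n (x : 'I_n -> V) (i : 'I_n) (v : V) : 'I_n -> V :=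
  fun k => if k == i then v else x k.

Definition multilinear n (f : cochain n) : Prop :=
  forall (x : 'I_n -> V) (i : 'I_n) (a : K) (u v : V),
    f (upd x i (a *: u + v)) = a *: f (upd x i u) + f (upd x i v).

Definition alternating n (f : cochain n) : Prop :=
  forall (x : 'I_n -> V) (i j : 'I_n), i != j -> x i = x j -> f x = 0.

Definition del n (x : 'I_n.+1 -> V) (i : 'I_n.+1) : 'I_n -> V :=
  fun k => x (lift i k).

(* Leibniz: (x_0, ..., \hat{x_i}, ..., x_i x_j, ..., x_n), with x_i x_j in the
   position previously occupied by x_j (i < j) *)
Definition leib_args n (x : 'I_n.+1 -> V) (i j : 'I_n.+1) : 'I_n -> V :=
  fun k => if lift i k == j then br (x i) (x j) else x (lift i k).

(* Leibniz coboundary d^n with coefficients in g_ad (left action x.m = [x,m],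
   right action m.x = [m,x]); indices are 0-based, so the 1-based signs
   (-1)^(i+1), (-1)^(n+1), (-1)^i become (-1)^i, (-1)^(n+1), (-1)^(i+1). *)
Definition leib_d n (f : cochain n) : cochain n.+1 :=
  fun x =>
    \sum_(i < n.+1 | (i < n)%N) (-1) ^+ i *: br (x i) (f (del x i))
    + (-1) ^+ n.+1 *: br (f (del x ord_max)) (x ord_max)
    + \sum_(i < n.+1) \sum_(j < n.+1 | (i < j)%N)
        (-1) ^+ i.+1 *: f (leib_args x i j).

(* Chevalley-Eilenberg: ([x_i,x_j], x_0, ..., \hat{x_i}, ..., \hat{x_j}, ..., x_n)
   for i < j *)
Definition ce_args n (x : 'I_n.+1 -> V) (i j : 'I_n.+1) : 'I_n -> V :=
  fun k => if val k == 0%N then br (x i) (x j)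
           else let k' := (val k).-1 in
                x (inord (if (k' < i)%N then k'
                          else if (k'.+1 < j)%N then k'.+1 else k'.+2)).

Definition ce_d n (f : cochain n) : cochain n.+1 :=
  fun x =>
    \sum_(i < n.+1) (-1) ^+ i *: br (x i) (f (del x i))
    + \sum_(i < n.+1) \sum_(j < n.+1 | (i < j)%N)
        (-1) ^+ (i + j) *: f (ce_args x i j).

Definition leib_cochain n (f : cochain n) : Prop := multilinear f.
Definition ce_cochain n (f : cochain n) : Prop := multilinear f /\ alternating f.

Definition leib_cocycle n (f : cochain n) : Prop :=
  leib_cochain f /\ forall x, leib_d f x = 0.
Definition leib_coboundary n (f : cochain n.+1) : Prop :=
  exists h : cochain n, leib_cochain h /\ forall x, f x = leib_d h x.

Definition ce_cocycle n (f : cochain n) : Prop :=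
  ce_cochain f /\ forall x, ce_d f x = 0.
Definition ce_coboundary n (f : cochain n.+1) : Prop :=
  exists h : cochain n, ce_cochain h /\ forall x, f x = ce_d h x.

(* g is complete: H^0(g,g) = 0 (every 0-cocycle vanishes; there are no
   coboundaries in degree 0) and H^1(g,g) = 0. *)
Definition complete_lie : Prop :=
  (forall f : cochain 0, ce_cocycle f -> forall x, f x = 0) /\
  (forall f : cochain 1, ce_cocycle f -> ce_coboundary f).

(* HL^{n+1}(g, g_ad) ~= H^{n+1}(g, g) as K-vector spaces: there is a map phi
   from Leibniz (n+1)-cochains to CE (n+1)-cochains which is K-linear on
   cocycles, maps cocycles to cocycles and coboundaries to coboundaries, and
   whose induced map on cohomology is injective and surjective. *)
Definition HL_iso_H n : Prop :=
  exists phi : cochain n.+1 -> cochain n.+1,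
    [/\ (forall f, leib_cocycle f -> ce_cocycle (phi f)),
        (forall (a : K) f g, leib_cocycle f -> leib_cocycle g ->
           forall x, phi (fun y => a *: f y + g y) x = a *: phi f x + phi g x),
        (forall f, leib_cocycle f -> leib_coboundary f -> ce_coboundary (phi f)),
        (forall f, leib_cocycle f -> ce_coboundary (phi f) -> leib_coboundary f) &
        (forall g, ce_cocycle g ->
           exists f, leib_cocycle f /\ ce_coboundary (fun y => phi f y - g y))].

End Cochains.

(* Main.v *)
Require Import Defs.
From mathcomp Require Import all_boot all_order all_algebra.
From mathcomp Require Import zify.
From mathcomp Require Import boolp wochoice.
From Stdlib Require Import FunctionalExtensionality ClassicalEpsilon.
Set Implicit Arguments. Unset Strict Implicit. Unset Printing Implicit Defensive.
Import GRing.Theory.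
Local Open Scope ring_scope.

Inductive zexpr := ZAtom of nat | ZAdd of zexpr & zexpr | ZOpp of zexpr | ZZero.

Fixpoint zeval (U : zmodType) (env : seq U) (e : zexpr) : U :=
  match e with
  | ZAtom n => nth 0 env n
  | ZAdd a b => zeval env a + zeval env b
  | ZOpp a => - zeval env a
  | ZZero => 0
  end.

Fixpoint zflat (e : zexpr) : seq (bool * nat) :=
  match e with
  | ZAtom n => [:: (false, n)]
  | ZAdd a b => zflat a ++ zflat b
  | ZOpp a => [seq (~~ p.1, p.2) | p <- zflat a]
  | ZZero => [::]
  end.

Definition zden (U : zmodType) (env : seq U) (l : seq (bool * nat)) : U :=
  \sum_(p <- l) (if p.1 then - nth 0 env p.2 else nth 0 env p.2).

Lemma zflatE (U : zmodType) (env : seq U) e : zeval env e = zden env (zflat e).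
Proof.
rewrite /zden; elim: e => [n|a iha b ihb|a iha|] /=.
- by rewrite big_seq1.
- by rewrite big_cat /= iha ihb.
- rewrite iha big_map /= -sumrN; apply: eq_bigr => -[[] n] _ //=.
  by rewrite opprK.
- by rewrite big_nil.
Qed.

Definition zbal (l : seq (bool * nat)) :=
  all (fun p => count_mem (false, p.2) l == count_mem (true, p.2) l) l.

Lemma zden_count (U : zmodType) (env : seq U) l N :
  all (fun p => p.2 < N)%N l ->
  zden env l = \sum_(i <- iota 0 N)
     nth 0 env i *~ ((count_mem (false, i) l)%:Z - (count_mem (true, i) l)%:Z).
Proof.
rewrite /zden; elim: l => [|p l IH] /=.
  by move=> _; rewrite big_nil big1 // => i _; rewrite subrr mulr0z.
case/andP=> pN /IH; rewrite big_cons => ->.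
have -> : \sum_(i <- iota 0 N) nth 0 env i *~ (((p == (false, i)) + count_mem (false, i) l)%:Z
      - ((p == (true, i)) + count_mem (true, i) l)%:Z)
   = \sum_(i <- iota 0 N) (nth 0 env i *~ ((p == (false, i))%:Z - (p == (true, i))%:Z))
     + \sum_(i <- iota 0 N) (nth 0 env i *~ ((count_mem (false, i) l)%:Z - (count_mem (true, i) l)%:Z)).
  rewrite -big_split /=; apply: eq_bigr => i _.
  rewrite -mulrzDr; congr (_ *~ _); rewrite !PoszD.
  by rewrite opprD addrACA.
congr (_ + _).
have pin : p.2 \in iota 0 N by rewrite mem_iota.
rewrite (bigD1_seq p.2) ?iota_uniq //= big1 ?addr0.
  by case: p pN pin => -[] n /=; rewrite !eqxx /= ?subr0 ?sub0r ?mulrNz ?mulr1z.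
move=> i /negbTE ne; case: p pN pin ne => b n /= _ _ ne.
rewrite !xpair_eqE (eq_sym n) ne !andbF subrr mulr0z //.
Qed.

Lemma zbal0 (U : zmodType) (env : seq U) l : zbal l -> zden env l = 0.
Proof.
move=> bl; rewrite (@zden_count _ _ _ (\max_(p <- l) p.2).+1).
  rewrite big1_seq // => i _.
  case: (boolP ((false, i) \in l)) => [inl|].
    by move/allP/(_ _ inl)/eqP: bl => /= ->; rewrite subrr mulr0z.
  case: (boolP ((true, i) \in l)) => [inl|].
    by move/allP/(_ _ inl)/eqP: bl => /= ->; rewrite subrr mulr0z.
  by move=> /count_memPn -> /count_memPn ->; rewrite subrr mulr0z.
apply/allP => p pl; rewrite ltnS; exact: (@leq_bigmax_seq _ _ _ _ _ pl).
Qed.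

Ltac zfind a env k :=
  lazymatch env with
  | nil => constr:(@None nat)
  | cons a _ => constr:(Some k)
  | cons ?b ?e =>
      match goal with
      | _ => let _ := constr:(@Logic.eq_refl _ a : a = b) in constr:(Some k)
      | _ => zfind a e (S k)
      end
  end.

Ltac zreify U t env :=
  lazymatch t with
  | @GRing.add _ ?a ?b =>
      let r1 := zreify U a env in
      lazymatch r1 with (?e1, ?env1) =>
      let r2 := zreify U b env1 in
      lazymatch r2 with (?e2, ?env2) => constr:((ZAdd e1 e2, env2)) end end
  | @GRing.opp _ ?a =>
      let r1 := zreify U a env in
      lazymatch r1 with (?e1, ?env1) => constr:((ZOpp e1, env1)) end
  | @GRing.zero _ => constr:((ZZero, env))
  | _ =>
      let o := zfind t env 0%N in
      lazymatch o with
      | Some ?k => constr:((ZAtom k, env))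
      | None => let n := eval compute in (size env) in
                let env' := eval cbv beta iota delta [cat] in (env ++ [:: t]) in
                constr:((ZAtom n, env'))
      end
  end.

Ltac zcancel :=
  lazymatch goal with
  | |- @eq ?U ?l ?r =>
    apply/eqP; rewrite -subr_eq0; apply/eqP;
    lazymatch goal with
    | |- @eq _ ?t _ =>
      let r := zreify U t (@nil U) in
      lazymatch r with (?e, ?env) =>
        change (zeval env e = 0); rewrite zflatE; apply: zbal0; vm_compute; reflexivity
      end
    end
  end.


Section Hamel.
Variables (K : fieldType) (V W : lmodType K).

Definition Rw : rel V := sval (well_ordering_principle V).
Lemma Rw_wo : well_order Rw.
Proof. exact: svalP (well_ordering_principle V). Qed.

Lemma Rw_min (P : V -> Prop) : (exists x, P x) -> exists z, P z /\ forall x, P x -> Rw z x.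
Proof.
move=> [x Px].
have [|z [[/asboolP Pz lb] _]] := Rw_wo (A := [pred y | `[< P y >]]).
  by exists x; rewrite inE; apply/asboolP.
by exists z; split=> // y Py; apply: lb; rewrite inE; apply/asboolP.
Qed.

Lemma Rw_tot x y : Rw x y || Rw y x.
Proof.
have [|z [[zA lb] _]] := Rw_wo (A := [pred u | (u == x) || (u == y)]).
  by exists x; rewrite inE eqxx.
have Hx : x \in [pred u | (u == x) || (u == y)] by rewrite inE eqxx.
have Hy : y \in [pred u | (u == x) || (u == y)] by rewrite inE eqxx orbT.
move: zA; rewrite inE => /orP[]/eqP Ez; subst z.
  by rewrite lb.
by rewrite (lb x Hx) orbT.
Qed.

Lemma Rw_refl x : Rw x x.
Proof. by have := Rw_tot x x; rewrite orbb. Qed.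

Lemma Rw_anti x y : Rw x y -> Rw y x -> x = y.
Proof.
move=> hxy hyx.
have [|z [_ U]] := Rw_wo (A := [pred u | (u == x) || (u == y)]).
  by exists x; rewrite inE eqxx.
have mx : minimum_of Rw [pred u | (u == x) || (u == y)] x.
  split; first by rewrite inE eqxx.
  by move=> u; rewrite inE => /orP[]/eqP ->; rewrite ?Rw_refl.
have my : minimum_of Rw [pred u | (u == x) || (u == y)] y.
  split; first by rewrite inE eqxx orbT.
  by move=> u; rewrite inE => /orP[]/eqP ->; rewrite ?Rw_refl.
by rewrite -(U x mx) (U y my).
Qed.

Lemma Rw_trans y x z : Rw x y -> Rw y z -> Rw x z.
Proof.
move=> hxy hyz.
have [|m [[mA lb] _]] := Rw_wo (A := [pred u | [|| u == x, u == y | u == z]]).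
  by exists x; rewrite inE eqxx.
have Hx : x \in [pred u | [|| u == x, u == y | u == z]] by rewrite inE eqxx.
have Hy : y \in [pred u | [|| u == x, u == y | u == z]] by rewrite inE eqxx orbT.
have Hz : z \in [pred u | [|| u == x, u == y | u == z]] by rewrite inE eqxx !orbT.
move: mA; rewrite inE => /or3P[]/eqP Em; subst m.
- exact: lb.
- by rewrite (Rw_anti hxy (lb x Hx)).
- by rewrite -(Rw_anti hyz (lb y Hy)).
Qed.

Lemma seq_max (s : seq V) : s != [::] -> exists2 m, m \in s & forall u, u \in s -> Rw u m.
Proof.
elim: s => [//|v s IH] _.
case: (eqVneq s [::]) => [->|ne].
  by exists v; rewrite ?mem_head // => u; rewrite inE => /eqP ->; rewrite Rw_refl.
have [m ms mmax] := IH ne.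
case/orP: (Rw_tot m v) => hmv.
  exists v; first exact: mem_head.
  move=> u; rewrite inE => /orP[/eqP ->|us]; first exact: Rw_refl.
  exact: Rw_trans (mmax u us) hmv.
exists m; first by rewrite inE ms orbT.
by move=> u; rewrite inE => /orP[/eqP ->|us] //; exact: mmax.
Qed.

Definition span (P : V -> Prop) (v : V) :=
  exists l : seq (K * V), (forall p, p \in l -> P p.2) /\ v = \sum_(p <- l) p.1 *: p.2.

Lemma span_uniq P v : span P v ->
  exists s : seq V, exists c : V -> K,
    [/\ uniq s, (forall u, u \in s -> P u) & v = \sum_(u <- s) c u *: u].
Proof.
case=> l [lP ->]; elim: l lP => [|[a x] l IH] lP.
  by exists [::], (fun _ => 0); rewrite !big_nil.
have [|s [c [us sP E]]] := IH.
  by move=> p pl; apply: lP; rewrite inE pl orbT.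
have Px : P x by apply: (lP (a, x)); rewrite mem_head.
rewrite big_cons /= E.
case: (boolP (x \in s)) => xs.
  exists s, (fun u => if u == x then a + c u else c u); split=> //.
  rewrite (bigD1_seq x) //= [in RHS](bigD1_seq x) //= eqxx scalerDl addrA.
  congr (_ + _); apply: eq_bigr => u /negbTE ->; done.
exists (x :: s), (fun u => if u == x then a else c u); split.
- by rewrite /= xs.
- by move=> u; rewrite inE => /orP[/eqP ->|/sP].
- rewrite big_cons eqxx; congr (_ + _); apply: eq_big_seq => u us2.
  by case: eqP => // ux; rewrite -ux us2 in xs.
Qed.

Lemma span_add P u v : span P u -> span P v -> span P (u + v).
Proof.
case=> l1 [P1 ->] [l2 [P2 ->]]; exists (l1 ++ l2); split; last by rewrite big_cat.
by move=> p; rewrite mem_cat => /orP[/P1|/P2].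
Qed.

Lemma span_scale P a v : span P v -> span P (a *: v).
Proof.
case=> l [Pl ->]; exists [seq (a * p.1, p.2) | p <- l]; split.
  by move=> p /mapP[q ql ->] /=; exact: (Pl q ql).
by rewrite big_map scaler_sumr; apply: eq_bigr => p _; rewrite scalerA.
Qed.

Lemma span0 P : span P 0.
Proof. by exists [::]; rewrite big_nil. Qed.

Lemma span1 P v : P v -> span P v.
Proof. by move=> Pv; exists [:: (1, v)]; rewrite big_seq1 scale1r; split=> // p; rewrite inE => /eqP ->. Qed.

Lemma span_sum P (s : seq V) (c : V -> K) :
  (forall u, u \in s -> span P u) -> span P (\sum_(u <- s) c u *: u).
Proof.
elim: s => [|v s IH] H; first by rewrite big_nil; exact: span0.
rewrite big_cons; apply: span_add; first by apply: span_scale; apply: H; rewrite mem_head.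
by apply: IH => u us; apply: H; rewrite inE us orbT.
Qed.

Lemma span_mono (P Q : V -> Prop) v : (forall u, P u -> span Q u) -> span P v -> span Q v.
Proof.
move=> PQ /span_uniq [s [c [_ sP ->]]]; apply: span_sum => u /sP; exact: PQ.
Qed.

Definition Bs (v : V) : Prop := ~ span (fun u => Rw u v /\ u <> v) v.

Lemma Bs_spanning v : span Bs v.
Proof.
apply: contrapT => nv.
have [m [nm mmin]] := Rw_min (P := fun v => ~ span Bs v) (ex_intro _ v nv).
apply: nm; case: (pselect (Bs m)) => [Bm|]; first exact: span1.
move=> /contrapT; apply: span_mono => u [Rum num].
apply: contrapT => nu; apply: num; exact: (Rw_anti Rum (mmin u nu)).
Qed.

Lemma Bs_indep (s : seq V) (c : V -> K) : uniq s -> (forall u, u \in s -> Bs u) ->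
  \sum_(u <- s) c u *: u = 0 -> forall u, u \in s -> c u = 0.
Proof.
move=> us sB E; apply: contrapT => /existsNP [u0] /not_implyP [u0s cu0].
set s' := [seq u <- s | c u != 0].
have s'ne : s' != [::].
  by apply/eqP => /(congr1 (fun t => u0 \in t)); rewrite mem_filter u0s andbT; move/eqP: cu0 => ->.
have [m ms' mmax] := seq_max s'ne.
have us' : uniq s' by rewrite filter_uniq.
move: (ms'); rewrite mem_filter => /andP[cm ms].
apply: (sB m ms).
have E' : \sum_(u <- s') c u *: u = 0.
  rewrite big_filter big_mkcond /= -[RHS]E; apply: eq_bigr => u _; case: eqP => [->|] /=; by rewrite ?scale0r.
rewrite (bigD1_seq m) //= in E'.
exists [seq (- c u / c m, u) | u <- s' & u != m]; split.
  move=> p /mapP [u]; rewrite mem_filter => /andP[um us1] -> /=; split.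
    exact: mmax.
  by move/eqP: um.
rewrite big_map big_filter /=.
have Ee : c m *: m = - \sum_(u <- s' | u != m) c u *: u.
  by apply/eqP; rewrite -addr_eq0 E'.
transitivity ((c m)^-1 *: (c m *: m)); first by rewrite scalerA mulVf // scale1r.
rewrite Ee scalerN scaler_sumr -sumrN; apply: eq_bigr => u _.
by rewrite scalerA mulNr scaleNr mulrC.
Qed.


Lemma sum_sub (U : zmodType) (s1 s2 : seq V) (F : V -> U) :
  uniq s1 -> uniq s2 -> {subset s1 <= s2} ->
  (forall u, u \in s2 -> u \notin s1 -> F u = 0) ->
  \sum_(u <- s1) F u = \sum_(u <- s2) F u.
Proof.
move=> u1 u2 sub F0.
rewrite [RHS](bigID [in s1]) /= [X in _ + X]big1_seq ?addr0; last first.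
  by move=> u /andP[nu us2]; apply: F0.
rewrite -[RHS]big_filter (perm_big [seq i <- s2 | i \in s1]) //.
apply: uniq_perm => //; first exact: filter_uniq.
by move=> u; rewrite mem_filter; case: (boolP (u \in s1)) => // /sub ->.
Qed.

Definition repP (v : V) (r : seq V * (V -> K)) :=
  [/\ uniq r.1, (forall u, u \in r.1 -> Bs u) & v = \sum_(u <- r.1) r.2 u *: u].

Lemma rep_ex v : exists r, repP v r.
Proof.
have [s [c [us sB E]]] := span_uniq (Bs_spanning v).
by exists (s, c); split.
Qed.

Definition rep (v : V) : seq V * (V -> K) :=
  epsilon (inhabits ([::], fun _ => 0)) (repP v).

Lemma repS v : repP v (rep v).
Proof. exact: epsilon_spec (rep_ex v). Qed.

Definition supp v := (rep v).1.
Definition coord v u := if u \in supp v then (rep v).2 u else 0.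

Lemma supp_uniq v : uniq (supp v).
Proof. by case: (repS v). Qed.
Lemma supp_B v u : u \in supp v -> Bs u.
Proof. by case: (repS v) => _ H _; apply: H. Qed.
Lemma coord_out v u : u \notin supp v -> coord v u = 0.
Proof. by rewrite /coord => /negbTE ->. Qed.

Lemma coord_expand v (s : seq V) : uniq s -> {subset supp v <= s} ->
  v = \sum_(u <- s) coord v u *: u.
Proof.
move=> us sub; case: (repS v) => su sB E.
rewrite -(@sum_sub _ (supp v)) //; last by move=> u _ /coord_out ->; rewrite scale0r.
rewrite {1}E; apply: eq_big_seq => u uin; by rewrite /coord -/(supp v) uin.
Qed.

Lemma coord_lin a v w u : coord (a *: v + w) u = a * coord v u + coord w u.
Proof.
case: (pselect (Bs u)) => Bu; last first.
  have nu x : u \notin supp x by apply/negP => /supp_B.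
  by rewrite !coord_out // mulr0 addr0.
set s := undup (u :: supp v ++ supp w ++ supp (a *: v + w)).
have us : uniq s by exact: undup_uniq.
have sB x : x \in s -> Bs x.
  rewrite mem_undup inE !mem_cat => /orP[/eqP ->//|/or3P[]]; exact: supp_B.
have sv : {subset supp v <= s} by move=> y yv; rewrite mem_undup inE mem_cat yv orbT.
have sw : {subset supp w <= s} by move=> y yv; rewrite mem_undup inE !mem_cat yv !orbT.
have sa : {subset supp (a *: v + w) <= s} by move=> y yv; rewrite mem_undup inE !mem_cat yv !orbT.
have E1 := coord_expand us sv; have E2 := coord_expand us sw; have E3 := coord_expand us sa.
have Z : \sum_(x <- s) (coord (a *: v + w) x - (a * coord v x + coord w x)) *: x = 0.
  rewrite (eq_bigr (fun x => coord (a *: v + w) x *: x - (a *: (coord v x *: x) + coord w x *: x)));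
    last by move=> x _; rewrite scalerBl scalerDl scalerA.
  by rewrite sumrB big_split /= -scaler_sumr -E1 -E2 -E3 subrr.
have us0 : u \in s by rewrite mem_undup mem_head.
by apply/eqP; rewrite -subr_eq0; apply/eqP; apply: (Bs_indep us sB Z us0).
Qed.


Definition Hq (q : V -> W) (u u' : V) : W :=
  if u == u' then q u else if Rw u u' then q (u + u') - q u - q u' else 0.

Definition Lift (q : V -> W) (x y : V) : W :=
  \sum_(u <- supp x) \sum_(u' <- supp y) (coord x u * coord y u') *: Hq q u u'.

Lemma Lift_supp q x y (s t : seq V) : uniq s -> uniq t ->
  {subset supp x <= s} -> {subset supp y <= t} ->
  Lift q x y = \sum_(u <- s) \sum_(u' <- t) (coord x u * coord y u') *: Hq q u u'.
Proof.
move=> us ut sx sy; rewrite /Lift (@sum_sub _ (supp x) s) ?supp_uniq //; last first.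
  by move=> u _ /coord_out ->; apply: big1 => u' _; rewrite mul0r scale0r.
apply: eq_bigr => u _; apply: sum_sub => //; first exact: supp_uniq.
by move=> u' _ /coord_out ->; rewrite mulr0 scale0r.
Qed.

Lemma Lift_lin1 q a x x' y : Lift q (a *: x + x') y = a *: Lift q x y + Lift q x' y.
Proof.
set s := undup (supp x ++ supp x' ++ supp (a *: x + x')).
have us : uniq s by exact: undup_uniq.
have ut := supp_uniq y.
rewrite !(@Lift_supp q _ y s (supp y)) //;
  try by move=> z zs; rewrite mem_undup !mem_cat zs ?orbT.
rewrite scaler_sumr -big_split; apply: eq_bigr => u _.
rewrite scaler_sumr -big_split; apply: eq_bigr => u' _.
by rewrite coord_lin mulrDl scalerDl scalerA mulrA.
Qed.

Lemma Lift_lin2 q a x y y' : Lift q x (a *: y + y') = a *: Lift q x y + Lift q x y'.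
Proof.
set t := undup (supp y ++ supp y' ++ supp (a *: y + y')).
have ut : uniq t by exact: undup_uniq.
have us := supp_uniq x.
rewrite !(@Lift_supp q x _ (supp x) t) //;
  try by move=> z zs; rewrite mem_undup !mem_cat zs ?orbT.
rewrite scaler_sumr -big_split; apply: eq_bigr => u _.
rewrite scaler_sumr -big_split; apply: eq_bigr => u' _.
rewrite coord_lin mulrDr scalerDl scalerA; congr (_ *: _ + _).
by rewrite mulrCA.
Qed.

Lemma Lift_linq q q1 q2 a : (forall x, q x = a *: q1 x + q2 x) ->
  forall x y, Lift q x y = a *: Lift q1 x y + Lift q2 x y.
Proof.
move=> E x y.
have E2 u u' : (coord x u * coord y u') *: Hq q u u' =
    a *: ((coord x u * coord y u') *: Hq q1 u u') + (coord x u * coord y u') *: Hq q2 u u'.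
  have E3 : Hq q u u' = a *: Hq q1 u u' + Hq q2 u u'.
    rewrite /Hq; case: eqP => _; first by rewrite E.
    case: (Rw u u'); last by rewrite scaler0 addr0.
    rewrite !E !scalerBr; zcancel.
  by rewrite E3 scalerDr !scalerA [_ * a]mulrC.
rewrite /Lift scaler_sumr -big_split; apply: eq_bigr => u _.
rewrite scaler_sumr -big_split; apply: eq_bigr => u' _; exact: E2.
Qed.

Definition Bq (q : V -> W) x y := q (x + y) - q x - q y.

Definition quad (q : V -> W) :=
  (forall a x, q (a *: x) = a ^+ 2 *: q x) /\
  (forall a x x' y, Bq q (a *: x + x') y = a *: Bq q x y + Bq q x' y).

Lemma Bq_sym q x y : Bq q x y = Bq q y x.
Proof. by rewrite /Bq [y + x]addrC; zcancel. Qed.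

Lemma quad0 q : quad q -> q 0 = 0.
Proof. by case=> H _; have := H 0 0; rewrite scale0r expr2 mulr0 scale0r. Qed.

Lemma Bq_sum q : quad q -> forall x (t : seq V) (c : V -> K),
  Bq q x (\sum_(u <- t) c u *: u) = \sum_(u <- t) c u *: Bq q x u.
Proof.
move=> Hq x t c; elim: t => [|v t IH].
  by rewrite !big_nil /Bq addr0 (quad0 Hq) subr0 subrr.
rewrite !big_cons Bq_sym; case: Hq => _ H2; rewrite H2 Bq_sym -IH; congr (_ + _).
by rewrite Bq_sym.
Qed.

Lemma Phi_sum q : quad q -> forall (t : seq V) (c : V -> K), uniq t ->
  \sum_(u <- t) \sum_(u' <- t) (c u * c u') *: Hq q u u' = q (\sum_(u <- t) c u *: u).
Proof.
move=> qq; elim=> [|v t IH] c /=; first by rewrite !big_nil (quad0 qq).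
case/andP=> vt ut.
set Y := \sum_(u <- t) c u *: u.
have HB u' : u' \in t -> Hq q v u' + Hq q u' v = Bq q v u'.
  move=> u't; have nv : (v == u') = false by apply/negP => /eqP E; rewrite E u't in vt.
  rewrite /Hq nv eq_sym nv.
  case: (boolP (Rw v u')) => Rvu.
    case: (boolP (Rw u' v)) => Ruv; last by rewrite addr0.
    by move/negP: nv; case; apply/eqP; apply: Rw_anti.
  have Ruv : Rw u' v by have := Rw_tot v u'; rewrite (negbTE Rvu).
  by rewrite Ruv add0r /Bq [u' + v]addrC; zcancel.
have e1 : Hq q v v = q v by rewrite /Hq eqxx.
have e2 : \sum_(j <- t) (c v * c j) *: Hq q v j + \sum_(j <- t) (c j * c v) *: Hq q j v
          = c v *: Bq q v Y.
  rewrite /Y Bq_sum // scaler_sumr -big_split; apply: eq_big_seq => j jt /=.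
  by rewrite [c j * _]mulrC -scalerDr HB // scalerA.
have e3 : q (c v *: v + Y) = (c v * c v) *: q v + q Y + c v *: Bq q v Y.
  case: (qq) => H1 H2.
  have -> : q (c v *: v + Y) = q (c v *: v) + q Y + Bq q (c v *: v) Y by rewrite /Bq; zcancel.
  have B0 : Bq q 0 Y = 0 by rewrite /Bq add0r (quad0 qq) subr0 subrr.
  by have := H2 (c v) v 0 Y; rewrite addr0 B0 addr0 => ->; rewrite H1 expr2.
have e4 : \sum_(j <- t) \sum_(u' <- v :: t) (c j * c u') *: Hq q j u' =
     \sum_(j <- t) (c j * c v) *: Hq q j v + \sum_(j <- t) \sum_(u' <- t) (c j * c u') *: Hq q j u'.
  by rewrite -big_split; apply: eq_bigr => j _; rewrite big_cons.
rewrite big_cons big_cons e4 IH // big_cons -/Y e3 -e2 e1; zcancel.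
Qed.

Lemma Lift_diag q : quad q -> forall x, Lift q x x = q x.
Proof.
move=> qq x; rewrite /Lift Phi_sum //; last exact: supp_uniq.
by rewrite -coord_expand //; exact: supp_uniq.
Qed.

End Hamel.

Section Lie.
Variables (K : fieldType) (V : lmodType K) (br : V -> V -> V).

Definition tn n (s : seq V) : 'I_n -> V := fun k => nth 0 s k.

Lemma del_tn n (s : seq V) (i : 'I_n.+1) :
  del (@tn n.+1 s) i = @tn n (take i s ++ drop i.+1 s).
Proof.
apply: functional_extensionality => k; rewrite /del /tn /= /bump.
case: (ltnP (size s) i) => his.
  rewrite take_oversize ?drop_oversize ?cats0; try lia.
  case: (leqP i k) => hik /=; last by rewrite add0n.
  by rewrite !nth_default //; lia.
rewrite nth_cat size_take_min (minn_idPl his).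
case: (ltnP k i) => hik /=.
  by rewrite (nth_take _ hik) add0n.
by rewrite nth_drop add1n; congr nth; lia.
Qed.

Lemma leib_args_tn n (s : seq V) (i j : 'I_n.+1) :
  leib_args br (@tn n.+1 s) i j =
  @tn n (take i (set_nth 0 s j (br (nth 0 s i) (nth 0 s j))) ++
         drop i.+1 (set_nth 0 s j (br (nth 0 s i) (nth 0 s j)))).
Proof.
rewrite -del_tn; apply: functional_extensionality => k.
by rewrite /leib_args /del /tn nth_set_nth.
Qed.

Ltac sgn := rewrite ?expr0 ?expr1 ?exprS ?mulN1r ?opprK ?mulr1 ?scale1r ?scaleN1r ?scaleNr ?opprK ?scale1r.

Lemma tnE n (s : seq V) (i : 'I_n) : @tn n s i = nth 0 s i.
Proof. by []. Qed.

Ltac bigx := do 4! (rewrite ?big_mkcond /= ?big_ord_recr ?big_ord0 /=).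

Lemma tn_eta n (g : 'I_n.+1 -> V) : g = @tn n.+1 [seq g (inord m) | m <- iota 0 n.+1].
Proof.
apply: functional_extensionality => k.
by rewrite /tn (nth_map 0%N) ?size_iota // nth_iota // add0n inord_val.
Qed.

Lemma ce_args_tn n (s : seq V) (i j : 'I_n.+1) :
  ce_args br (@tn n.+1 s) i j =
  @tn n [seq (if m == 0%N then br (nth 0 s i) (nth 0 s j) else
       nth 0 s (@inord n (if (m.-1 < i)%N then m.-1
                          else if (m.-1.+1 < j)%N then m.-1.+1 else m.-1.+2)))
         | m <- iota 0 n].
Proof.
case: n i j => [|n] i j; first by apply: functional_extensionality => -[].
rewrite [LHS]tn_eta; congr tn; apply/eq_in_map => m; rewrite mem_iota add0n => /andP[_ hm].
rewrite /ce_args; have -> : val (@inord n m) = m by exact: inordK.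
by [].
Qed.


Local Notation T0 := (@tn 0 [::]).
Local Notation T1 a := (@tn 1 [:: a]).
Local Notation T2 a b := (@tn 2 [:: a; b]).
Local Notation T3 a b c := (@tn 3 [:: a; b; c]).
Local Notation T4 a b c d := (@tn 4 [:: a; b; c; d]).

Ltac cfE := rewrite ?/leib_d ?/ce_d; do 6! (rewrite ?big_mkcond /= ?big_ord_recr ?big_ord0 /=);
  rewrite ?del_tn ?leib_args_tn ?ce_args_tn /= ?tnE /= ?inordK //=; sgn; zcancel.

Lemma LD1 (h : cochain V 1) a b :
  leib_d br h (T2 a b) = br a (h (T1 b)) + br (h (T1 a)) b - h (T1 (br a b)).
Proof. cfE. Qed.

Lemma LD2 (h : cochain V 2) a b c :
  leib_d br h (T3 a b c) = br a (h (T2 b c)) - br b (h (T2 a c)) - br (h (T2 a b)) c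
    - h (T2 (br a b) c) - h (T2 b (br a c)) + h (T2 a (br b c)).
Proof. cfE. Qed.

Lemma LD3 (F : cochain V 3) a b c d :
  leib_d br F (T4 a b c d) = br a (F (T3 b c d)) - br b (F (T3 a c d)) + br c (F (T3 a b d))
    + br (F (T3 a b c)) d - F (T3 (br a b) c d) - F (T3 b (br a c) d) - F (T3 b c (br a d))
    + F (T3 a (br b c) d) + F (T3 a c (br b d)) - F (T3 a b (br c d)).
Proof. cfE. Qed.

Lemma CE0 (h : cochain V 0) a : ce_d br h (T1 a) = br a (h T0).
Proof. cfE. Qed.

Lemma CE1 (h : cochain V 1) a b :
  ce_d br h (T2 a b) = br a (h (T1 b)) - br b (h (T1 a)) - h (T1 (br a b)).
Proof. cfE. Qed.

Lemma CE2 (h : cochain V 2) a b c :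
  ce_d br h (T3 a b c) = br a (h (T2 b c)) - br b (h (T2 a c)) + br c (h (T2 a b))
    - h (T2 (br a b) c) + h (T2 (br a c) b) - h (T2 (br b c) a).
Proof. cfE. Qed.

Lemma CE3 (F : cochain V 3) a b c d :
  ce_d br F (T4 a b c d) = br a (F (T3 b c d)) - br b (F (T3 a c d)) + br c (F (T3 a b d))
    - br d (F (T3 a b c)) - F (T3 (br a b) c d) + F (T3 (br a c) b d) - F (T3 (br a d) b c)
    - F (T3 (br b c) a d) + F (T3 (br b d) a c) - F (T3 (br c d) a b).
Proof. cfE. Qed.


Lemma upd_tn n (s : seq V) (i : 'I_n) y : upd (@tn n s) i y = @tn n (set_nth 0 s i y).
Proof. by apply: functional_extensionality => k; rewrite /upd /tn nth_set_nth. Qed.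

Lemma eta0 (x : 'I_0 -> V) : x = T0.
Proof. by apply: functional_extensionality => -[]. Qed.

Definition lin1 (h : cochain V 1) := forall a u v, h (T1 (a *: u + v)) = a *: h (T1 u) + h (T1 v).
Definition bilin (h : cochain V 2) :=
  (forall a u v w, h (T2 (a *: u + v) w) = a *: h (T2 u w) + h (T2 v w)) /\
  (forall a u v w, h (T2 w (a *: u + v)) = a *: h (T2 w u) + h (T2 w v)).
Definition trilin (F : cochain V 3) :=
  [/\ (forall a u v w z, F (T3 (a *: u + v) w z) = a *: F (T3 u w z) + F (T3 v w z)),
      (forall a u v w z, F (T3 w (a *: u + v) z) = a *: F (T3 w u z) + F (T3 w v z)) &
      (forall a u v w z, F (T3 w z (a *: u + v)) = a *: F (T3 w z u) + F (T3 w z v))].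

Lemma ml1P (h : cochain V 1) : multilinear h <-> lin1 h.
Proof.
split=> [H a u v|H x i a u v].
  by have := H (T1 0) ord0 a u v; rewrite !upd_tn.
rewrite [x]tn_eta /= !upd_tn; case: i => -[|m] Hi /=; [exact: H|by rewrite !ltnS ?ltn0 in Hi].
Qed.

Lemma ml2P (h : cochain V 2) : multilinear h <-> bilin h.
Proof.
split=> [H|[H1 H2] x i a u v].
  split=> a u v w.
    by have := H (T2 0 w) ord0 a u v; rewrite !upd_tn.
  by have := H (T2 w 0) (inord 1) a u v; rewrite !upd_tn /= !inordK.
rewrite [x]tn_eta /= !upd_tn; case: i => -[|[|m]] Hi /=; [exact: H1 | exact: H2|by rewrite !ltnS ?ltn0 in Hi].
Qed.

Lemma ml3P (F : cochain V 3) : multilinear F <-> trilin F.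
Proof.
split=> [H|[H1 H2 H3] x i a u v].
  split=> a u v w z.
  - by have := H (T3 0 w z) ord0 a u v; rewrite !upd_tn.
  - by have := H (T3 w 0 z) (inord 1) a u v; rewrite !upd_tn /= !inordK.
  - by have := H (T3 w z 0) (inord 2) a u v; rewrite !upd_tn /= !inordK.
rewrite [x]tn_eta /= !upd_tn; case: i => -[|[|[|m]]] Hi /=; [exact: H1 | exact: H2 | exact: H3|by rewrite !ltnS ?ltn0 in Hi].
Qed.

Lemma alt1 (h : cochain V 1) : alternating h.
Proof. by move=> x [[|m] Hi] [[|n] Hj] //; rewrite !ltnS ?ltn0 in Hi Hj. Qed.

Lemma alt0 (h : cochain V 0) : alternating h.
Proof. by move=> x []. Qed.

Ltac ordtac := first [ by rewrite ?tnE /= ?inordK | by apply/eqP => /(congr1 val) /=; rewrite ?inordK ].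

Lemma alt2P (h : cochain V 2) : alternating h <-> forall a, h (T2 a a) = 0.
Proof.
split=> [H a|H x i j].
  by apply: (H _ ord0 (inord 1)); ordtac.
rewrite [x]tn_eta /=; move: (x (inord 0)) (x (inord 1)) => a0 a1.
case: i => -[|[|m]] Hi; case: j => -[|[|n]] Hj //= _; try by rewrite !ltnS ?ltn0 in Hi Hj.
 all: rewrite !tnE /= => ->; exact: H.
Qed.

Lemma alt3P (F : cochain V 3) : alternating F <->
  [/\ (forall a b, F (T3 a a b) = 0), (forall a b, F (T3 a b b) = 0) & (forall a b, F (T3 a b a) = 0)].
Proof.
split=> [H|[H1 H2 H3] x i j].
  split=> a b.
  - by apply: (H _ ord0 (inord 1)); ordtac.
  - by apply: (H _ (inord 1) (inord 2)); ordtac.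
  - by apply: (H _ ord0 (inord 2)); ordtac.
rewrite [x]tn_eta /=; move: (x (inord 0)) (x (inord 1)) (x (inord 2)) => a0 a1 a2.
case: i => -[|[|[|m]]] Hi; case: j => -[|[|[|n]]] Hj //= _; try by rewrite !ltnS ?ltn0 in Hi Hj.
 all: rewrite !tnE /= => E;
  rewrite ?E; by [apply: H1 | apply: H2 | apply: H3 | rewrite -E; apply: H1 | rewrite -E; apply: H2 | rewrite -E; apply: H3].
Qed.


Hypothesis HL : is_lie_bracket br.

Lemma brDl x y z : br (x + y) z = br x z + br y z.
Proof. by case: HL => H _ _ _; have := H 1 x y z; rewrite !scale1r. Qed.
Lemma brDr x y z : br z (x + y) = br z x + br z y.
Proof. by case: HL => _ H _ _; have := H 1 x y z; rewrite !scale1r. Qed.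
Lemma br0l z : br 0 z = 0.
Proof. by apply: (addrI (br 0 z)); rewrite -brDl !addr0. Qed.
Lemma br0r z : br z 0 = 0.
Proof. by apply: (addrI (br z 0)); rewrite -brDr !addr0. Qed.
Lemma brZl a x z : br (a *: x) z = a *: br x z.
Proof. by case: HL => H _ _ _; have := H a x 0 z; rewrite !addr0 br0l addr0. Qed.
Lemma brZr a x z : br z (a *: x) = a *: br z x.
Proof. by case: HL => _ H _ _; have := H a x 0 z; rewrite !addr0 br0r addr0. Qed.
Lemma brNl x z : br (- x) z = - br x z.
Proof. by rewrite -scaleN1r brZl scaleN1r. Qed.
Lemma brNr x z : br z (- x) = - br z x.
Proof. by rewrite -scaleN1r brZr scaleN1r. Qed.
Lemma brBl x y z : br (x - y) z = br x z - br y z.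
Proof. by rewrite brDl brNl. Qed.
Lemma brBr x y z : br z (x - y) = br z x - br z y.
Proof. by rewrite brDr brNr. Qed.
Lemma brxx x : br x x = 0.
Proof. by case: HL => _ _ H1 H2; [apply: H1 || apply: H2]. Qed.
Lemma brC x y : br x y = - br y x.
Proof.
have := brxx (x + y); rewrite brDl !brDr !brxx add0r addr0 => /eqP.
by rewrite addr_eq0 => /eqP.
Qed.
Lemma jac x y z : br x (br y z) + br y (br z x) + br z (br x y) = 0.
Proof. by case: HL => _ _ H1 H2; [apply: H1 || apply: H2]. Qed.
Lemma leibV p q r : br p (br q r) - br (br p q) r - br q (br p r) = 0.
Proof.
apply: etrans (jac p q r); rewrite (brC (br p q) r) (brC p r) brNr; zcancel.
Qed.

Definition linf (g : V -> V) := forall a u v, g (a *: u + v) = a *: g u + g v.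
Lemma linfD g : linf g -> forall u v, g (u + v) = g u + g v.
Proof. by move=> H u v; have := H 1 u v; rewrite !scale1r. Qed.
Lemma linf0 g : linf g -> g 0 = 0.
Proof. by move=> H; apply: (addrI (g 0)); rewrite -(linfD H) !addr0. Qed.
Lemma linfZ g : linf g -> forall a u, g (a *: u) = a *: g u.
Proof. by move=> H a u; rewrite -(addr0 (a *: u)) H (linf0 H) addr0. Qed.
Lemma linfN g : linf g -> forall u, g (- u) = - g u.
Proof. by move=> H u; rewrite -scaleN1r (linfZ H) scaleN1r. Qed.
Lemma linfB g : linf g -> forall u v, g (u - v) = g u - g v.
Proof. by move=> H u v; rewrite (linfD H) (linfN H). Qed.

Lemma bilin1 h : bilin h -> forall w, linf (fun u => h (T2 u w)).
Proof. by case=> H _ w a u v; apply: H. Qed.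
Lemma bilin2 h : bilin h -> forall w, linf (fun u => h (T2 w u)).
Proof. by case=> _ H w a u v; apply: H. Qed.

Lemma hL1 h : bilin h -> forall p q r w,
  h (T2 (br p (br q r)) w) - h (T2 (br (br p q) r) w) - h (T2 (br q (br p r)) w) = 0.
Proof.
move=> Hb p q r w; have E : br p (br q r) = br (br p q) r + br q (br p r).
  by apply/eqP; rewrite -subr_eq0 opprD addrA; apply/eqP; apply: leibV.
by rewrite E (linfD (bilin1 Hb w)); zcancel.
Qed.
Lemma hL2 h : bilin h -> forall w p q r,
  h (T2 w (br p (br q r))) - h (T2 w (br (br p q) r)) - h (T2 w (br q (br p r))) = 0.
Proof.
move=> Hb w p q r; have E : br p (br q r) = br (br p q) r + br q (br p r).
  by apply/eqP; rewrite -subr_eq0 opprD addrA; apply/eqP; apply: leibV.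
by rewrite E (linfD (bilin2 Hb w)); zcancel.
Qed.

Lemma zero_by (S D : V) : S - D = 0 -> D = 0 -> S = 0.
Proof. by move=> E HD; move: E; rewrite HD subr0. Qed.

Lemma dd h : bilin h -> forall a b c d, leib_d br (leib_d br h) (T4 a b c d) = 0.
Proof.
move=> Hb a b c d; rewrite LD3 !LD2 ?brDr ?brNr ?brDl ?brNl.
apply: (zero_by (D := (br a (br b (h (T2 c d))) - br (br a b) (h (T2 c d)) - br b (br a (h (T2 c d)))) - (br a (br c (h (T2 b d))) - br (br a c) (h (T2 b d)) - br c (br a (h (T2 b d)))) - (br a (br (h (T2 b c)) d) - br (br a (h (T2 b c))) d - br (h (T2 b c)) (br a d)) + (br b (br c (h (T2 a d))) - br (br b c) (h (T2 a d)) - br c (br b (h (T2 a d)))) + (br b (br (h (T2 a c)) d) - br (br b (h (T2 a c))) d - br (h (T2 a c)) (br b d)) + (br (h (T2 a b)) (br c d) - br (br (h (T2 a b)) c) d - br c (br (h (T2 a b)) d)) - (h (T2 (br a (br b c)) d) - h (T2 (br (br a b) c) d) - h (T2 (br b (br a c)) d)) - (h (T2 c (br a (br b d))) - h (T2 c (br (br a b) d)) - h (T2 c (br b (br a d)))) + (h (T2 b (br a (br c d))) - h (T2 b (br (br a c) d)) - h (T2 b (br c (br a d)))) - (h (T2 a (br b (br c d))) - h (T2 a (br (br b c) d)) - h (T2 a (br c (br b d)))))).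
  zcancel.
by rewrite !leibV !(hL1 Hb) !(hL2 Hb) !subr0 !addr0.
Qed.


Section HB.
Variable h : cochain V 2.
Hypothesis Hb : bilin h.
Lemma h1D u v w : h (T2 (u + v) w) = h (T2 u w) + h (T2 v w).
Proof. exact: (linfD (bilin1 Hb w)). Qed.
Lemma h2D u v w : h (T2 w (u + v)) = h (T2 w u) + h (T2 w v).
Proof. exact: (linfD (bilin2 Hb w)). Qed.
Lemma h1Z a u w : h (T2 (a *: u) w) = a *: h (T2 u w).
Proof. exact: (linfZ (bilin1 Hb w)). Qed.
Lemma h2Z a u w : h (T2 w (a *: u)) = a *: h (T2 w u).
Proof. exact: (linfZ (bilin2 Hb w)). Qed.
Lemma h10 w : h (T2 0 w) = 0.
Proof. exact: (linf0 (bilin1 Hb w)). Qed.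
Lemma h20 w : h (T2 w 0) = 0.
Proof. exact: (linf0 (bilin2 Hb w)). Qed.
Lemma h1N u w : h (T2 (- u) w) = - h (T2 u w).
Proof. exact: (linfN (bilin1 Hb w)). Qed.
Lemma h2N u w : h (T2 w (- u)) = - h (T2 w u).
Proof. exact: (linfN (bilin2 Hb w)). Qed.

Lemma alt2_anti : (forall a, h (T2 a a) = 0) -> forall u v, h (T2 u v) = - h (T2 v u).
Proof.
move=> H0 u v; have := H0 (u + v); rewrite h1D !h2D !H0 add0r addr0 => /eqP.
by rewrite addr_eq0 => /eqP.
Qed.

Lemma LD2_CE2 : (forall a, h (T2 a a) = 0) ->
  forall a b c, leib_d br h (T3 a b c) = ce_d br h (T3 a b c).
Proof.
move=> H0 a b c; rewrite LD2 CE2 (alt2_anti H0 b (br a c)) (alt2_anti H0 a (br b c)).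
rewrite (brC (h _) c); zcancel.
Qed.

Lemma LD2_trilin : trilin (leib_d br h).
Proof.
split=> a u v w z; rewrite !LD2;
  rewrite ?brDl ?brDr ?brZl ?brZr ?h1D ?h2D ?h1Z ?h2Z ?brDl ?brDr ?brZl ?brZr ?scalerDr ?scalerBr ?scalerN;
  zcancel.
Qed.

Lemma LD2_diag a z : leib_d br h (T3 a a z) = br z (h (T2 a a)).
Proof. by rewrite LD2 brxx h10 (brC (h _) z); zcancel. Qed.
End HB.

Section FB.
Variable F : cochain V 3.
Hypothesis Ht : trilin F.
Lemma F1D u v w z : F (T3 (u + v) w z) = F (T3 u w z) + F (T3 v w z).
Proof. by case: Ht => H _ _; have := H 1 u v w z; rewrite !scale1r. Qed.
Lemma F2D u v w z : F (T3 w (u + v) z) = F (T3 w u z) + F (T3 w v z).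
Proof. by case: Ht => _ H _; have := H 1 u v w z; rewrite !scale1r. Qed.
Lemma F3D u v w z : F (T3 w z (u + v)) = F (T3 w z u) + F (T3 w z v).
Proof. by case: Ht => _ _ H; have := H 1 u v w z; rewrite !scale1r. Qed.
Lemma F10 w z : F (T3 0 w z) = 0.
Proof. by apply: (addrI (F (T3 0 w z))); rewrite -F1D !addr0. Qed.
Lemma F20 w z : F (T3 w 0 z) = 0.
Proof. by apply: (addrI (F (T3 w 0 z))); rewrite -F2D !addr0. Qed.
Lemma F30 w z : F (T3 w z 0) = 0.
Proof. by apply: (addrI (F (T3 w z 0))); rewrite -F3D !addr0. Qed.
Lemma F1Z a u w z : F (T3 (a *: u) w z) = a *: F (T3 u w z).
Proof. by case: Ht => H _ _; have := H a u 0 w z; rewrite !addr0 F10 addr0. Qed.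
Lemma F2Z a u w z : F (T3 w (a *: u) z) = a *: F (T3 w u z).
Proof. by case: Ht => _ H _; have := H a u 0 w z; rewrite !addr0 F20 addr0. Qed.
Lemma F3Z a u w z : F (T3 w z (a *: u)) = a *: F (T3 w z u).
Proof. by case: Ht => _ _ H; have := H a u 0 w z; rewrite !addr0 F30 addr0. Qed.
Lemma F1N u w z : F (T3 (- u) w z) = - F (T3 u w z).
Proof. by rewrite -scaleN1r F1Z scaleN1r. Qed.
Lemma F2N u w z : F (T3 w (- u) z) = - F (T3 w u z).
Proof. by rewrite -scaleN1r F2Z scaleN1r. Qed.
Lemma F3N u w z : F (T3 w z (- u)) = - F (T3 w z u).
Proof. by rewrite -scaleN1r F3Z scaleN1r. Qed.

Lemma F_anti12 : (forall a b, F (T3 a a b) = 0) -> forall u v w, F (T3 u v w) = - F (T3 v u w).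
Proof.
move=> H0 u v w; have := H0 (u + v) w; rewrite F1D !F2D !H0 add0r addr0 => /eqP.
by rewrite addr_eq0 => /eqP.
Qed.
Lemma F_anti23 : (forall a b, F (T3 a b b) = 0) -> forall u v w, F (T3 u v w) = - F (T3 u w v).
Proof.
move=> H0 u v w; have := H0 u (v + w); rewrite F2D !F3D !H0 add0r addr0 => /eqP.
by rewrite addr_eq0 => /eqP.
Qed.

Lemma LD3_CE3 : alternating F -> forall a b c d, leib_d br F (T4 a b c d) = ce_d br F (T4 a b c d).
Proof.
case/alt3P => H1 H2 H3 a b c d.
have A12 := F_anti12 H1; have A23 := F_anti23 H2.
rewrite LD3 CE3.
rewrite (brC (F _) d).
rewrite (A12 b (br a c)) (A12 a (br b c)).
rewrite (A23 b c (br a d)) (A12 b (br a d)).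
rewrite (A23 a c (br b d)) (A12 a (br b d)).
rewrite (A23 a b (br c d)) (A12 a (br c d)).
zcancel.
Qed.
End FB.

Lemma LD3_add (F G : cochain V 3) a b c d :
  leib_d br (fun y => F y + G y) (T4 a b c d) = leib_d br F (T4 a b c d) + leib_d br G (T4 a b c d).
Proof. by rewrite !LD3 ?brDl ?brDr; zcancel. Qed.

Lemma LD2_add (h k : cochain V 2) a b c :
  leib_d br (fun y => h y + k y) (T3 a b c) = leib_d br h (T3 a b c) + leib_d br k (T3 a b c).
Proof. by rewrite !LD2 ?brDl ?brDr; zcancel. Qed.

Lemma LD2_ext (h k1 k2 : cochain V 2) (s : K) :
  (forall u v, h (T2 u v) = s *: k1 (T2 u v) + k2 (T2 u v)) ->
  forall a b c, leib_d br h (T3 a b c) = s *: leib_d br k1 (T3 a b c) + leib_d br k2 (T3 a b c).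
Proof.
move=> E a b c; rewrite !LD2 !E ?brDl ?brDr ?brZl ?brZr ?scalerDr ?scalerBr ?scalerN; zcancel.
Qed.

Hypothesis HC : complete_lie br.

Lemma eta1 (x : 'I_1 -> V) : x = T1 (x (inord 0)).
Proof. by rewrite [LHS]tn_eta. Qed.
Lemma eta2 (x : 'I_2 -> V) : x = T2 (x (inord 0)) (x (inord 1)).
Proof. by rewrite [LHS]tn_eta. Qed.
Lemma eta3 (x : 'I_3 -> V) : x = T3 (x (inord 0)) (x (inord 1)) (x (inord 2)).
Proof. by rewrite [LHS]tn_eta. Qed.
Lemma eta4 (x : 'I_4 -> V) : x = T4 (x (inord 0)) (x (inord 1)) (x (inord 2)) (x (inord 3)).
Proof. by rewrite [LHS]tn_eta. Qed.

Lemma center_free c : (forall z, br z c = 0) -> c = 0.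
Proof.
move=> H; case: HC => H0 _.
apply: (H0 (fun _ => c) _ T0); split; first by split; [move=> ? [] | exact: alt0].
by move=> x; rewrite [x]eta1 CE0; apply: H.
Qed.

Lemma center_free' c : (forall z, br c z = 0) -> c = 0.
Proof. by move=> H; apply: center_free => z; rewrite brC H oppr0. Qed.

Definition derivation (D : V -> V) := forall y z, D (br y z) = br (D y) z + br y (D z).

Lemma inner_der (D : V -> V) : linf D -> derivation D -> exists c, forall z, D z = br z c.
Proof.
move=> Dl Dd; case: HC => _ H1.
have [|h0 [_ E]] := H1 (fun x => D (x ord0)).
  split; first split.
  - by apply/ml1P => a u v; rewrite !tnE; apply: Dl.
  - exact: alt1.
  by move=> x; rewrite [x]eta2 CE1 !tnE /= Dd (brC (D _) _); zcancel.
by exists (h0 T0) => z; have := E (T1 z); rewrite CE0 tnE.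
Qed.

Definition Inn (D : V -> V) : V := epsilon (inhabits 0) (fun c => forall z, D z = br z c).

Lemma Inn_eq D c : (forall z, D z = br z c) -> Inn D = c.
Proof.
move=> H; have S := epsilon_spec (inhabits 0) (fun c => forall z, D z = br z c) (ex_intro _ c H).
apply/eqP; rewrite -subr_eq0; apply/eqP; apply: center_free => z.
by rewrite brBr -S H subrr.
Qed.

Lemma InnP D : linf D -> derivation D -> forall z, D z = br z (Inn D).
Proof. by move=> Dl Dd; have [c Hc] := inner_der Dl Dd; rewrite (Inn_eq Hc). Qed.

Lemma iso2 : HL_iso_H br 1.
Proof.
exists (fun f => f); split.
- move=> f [Hm Hc]; have Hb := (ml2P f).1 Hm.
  have H0 : forall a, f (T2 a a) = 0.
    move=> a; apply: center_free => z; have := Hc (T3 a a z); rewrite LD2_diag //.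
  split; first by split => //; exact/alt2P.
  by move=> x; rewrite [x]eta3 -LD2_CE2 //; apply: Hc.
- by move=> a f g _ _ x.
- move=> f _ [h [Hh E]]; exists h; split; first by split => //; exact: alt1.
  by move=> x; rewrite E [x]eta2 LD1 CE1 (brC (h _) _); zcancel.
- move=> f _ [h [[Hh _] E]]; exists h; split => // x.
  by rewrite E [x]eta2 LD1 CE1 (brC (h _) _); zcancel.
- move=> g [[Hm Ha] Hc]; exists g; split.
    split => // x; rewrite [x]eta3 LD2_CE2; first exact: Hc.
      exact/ml2P.
    exact/alt2P.
  exists (fun _ => 0); split; first split.
  + by apply/ml1P => a u v; rewrite scaler0 addr0.
  + exact: alt1.
  by move=> x; rewrite subrr [x]eta2 CE1 !br0r subrr sub0r oppr0.
Qed.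


Definition WF (F : cochain V 3) (x : V) : V := Inn (fun z => F (T3 x x z)).
Definition qF (F : cochain V 3) : V -> V := fun x => - WF F x.
Definition hF (F : cochain V 3) : cochain V 2 := fun y => Lift (qF F) (y ord0) (y (inord 1)).
Definition phi3 (F : cochain V 3) : cochain V 3 := fun y => F y + leib_d br (hF F) y.

Lemma hFE F a b : hF F (T2 a b) = Lift (qF F) a b.
Proof. by rewrite /hF !tnE /= inordK. Qed.

Lemma hF_bilin F : bilin (hF F).
Proof. by split=> a u v w; rewrite !hFE; [apply: Lift_lin1 | apply: Lift_lin2]. Qed.

Definition lcoc (F : cochain V 3) := trilin F /\ forall a b c d, leib_d br F (T4 a b c d) = 0.

Lemma lcocP F : leib_cocycle br F -> lcoc F.
Proof. by case=> Hm Hc; split; [exact/ml3P | move=> a b c d; apply: Hc]. Qed.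

Section G.
Variable F : cochain V 3.
Hypothesis HF : lcoc F.

Lemma Fdiag_lin x : linf (fun z => F (T3 x x z)).
Proof. by case: HF => -[_ _ H] _ a u v; apply: H. Qed.

Lemma Fdiag_der x : derivation (fun z => F (T3 x x z)).
Proof.
move=> y z; have := HF.2 x x y z; rewrite LD3 brxx (F10 HF.1) => E.
apply/eqP; rewrite -subr_eq0 -oppr_eq0; apply/eqP; apply: etrans _ E; zcancel.
Qed.

Lemma WF_spec x z : F (T3 x x z) = br z (WF F x).
Proof. exact: (InnP (Fdiag_lin x) (Fdiag_der x)). Qed.

Lemma BqF x y z : br z (Bq (qF F) x y) = - (F (T3 x y z) + F (T3 y x z)).
Proof.
rewrite /Bq /qF !brBr !brNr -!WF_spec (F1D HF.1) !(F2D HF.1); zcancel.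
Qed.

Lemma qF_quad : quad (qF F).
Proof.
split.
  move=> a x; rewrite /qF; have -> : WF F (a *: x) = a ^+ 2 *: WF F x.
    by apply: Inn_eq => z; rewrite (F1Z HF.1) (F2Z HF.1) WF_spec brZr scalerA expr2.
  by rewrite scalerN.
move=> a x x' y; apply/eqP; rewrite -subr_eq0; apply/eqP; apply: center_free => z.
move: (BqF (a *: x + x') y z) (BqF x y z) (BqF x' y z).
set A := Bq _ (a *: x + x') y; set B := Bq _ x y; set C := Bq _ x' y.
clearbody A B C => eA eB eC.
rewrite brBr brDr brZr eA eB eC (F1D HF.1) (F2D HF.1) (F1Z HF.1) (F2Z HF.1).
rewrite ?scalerN ?scalerDr; zcancel.
Qed.

Lemma hF_diag x : hF F (T2 x x) = - WF F x.
Proof. by rewrite hFE Lift_diag //; exact: qF_quad. Qed.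

Lemma G_trilin : trilin (phi3 F).
Proof.
case: HF => -[A1 A2 A3] _; case: (LD2_trilin (hF_bilin F)) => B1 B2 B3.
by split=> a u v w z; rewrite /phi3 /= ?A1 ?B1 ?A2 ?B2 ?A3 ?B3 [in RHS]scalerDr; zcancel.
Qed.

Lemma G_diag x z : phi3 F (T3 x x z) = 0.
Proof. by rewrite /phi3 (LD2_diag (hF_bilin F)) hF_diag WF_spec brNr subrr. Qed.

Lemma G_coc a b c d : leib_d br (phi3 F) (T4 a b c d) = 0.
Proof. by rewrite /phi3 LD3_add HF.2 (dd (hF_bilin F)) addr0. Qed.

Lemma G_abb x y : phi3 F (T3 x y y) = 0.
Proof.
apply: center_free' => t.
have A12 := F_anti12 G_trilin G_diag.
have := G_coc x y y t; rewrite LD3 !G_diag brxx (F20 G_trilin) (A12 (br x y)) br0r => E.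
apply: etrans _ E; zcancel.
Qed.

Lemma G_alt : alternating (phi3 F).
Proof.
apply/alt3P; split=> a b; [exact: G_diag | exact: G_abb |].
by rewrite (F_anti12 G_trilin G_diag) G_abb oppr0.
Qed.

Lemma G_cocycle : ce_cocycle br (phi3 F).
Proof.
split; first by split; [apply/ml3P; exact: G_trilin | exact: G_alt].
by move=> x; rewrite [x]eta4 -(LD3_CE3 G_trilin G_alt); exact: G_coc.
Qed.
End G.

Lemma WF_lin a f g : lcoc f -> lcoc g ->
  forall x, WF (fun y => a *: f y + g y) x = a *: WF f x + WF g x.
Proof.
move=> Hf Hg x; apply: Inn_eq => z /=.
by rewrite (WF_spec Hf) (WF_spec Hg) brDr brZr.
Qed.

Lemma hF0 g : lcoc g -> (forall a b, g (T3 a a b) = 0) -> forall u v, hF g (T2 u v) = 0.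
Proof.
move=> Hg H0 u v; rewrite hFE.
have E : forall x, qF g x = (-1) *: qF g x + qF g x.
  move=> x; rewrite /qF (_ : WF g x = 0) ?oppr0 ?scaler0 ?addr0 //.
  by apply: Inn_eq => z; rewrite H0 br0r.
by have L := Lift_linq E u v; rewrite scaleN1r addNr in L.
Qed.

Lemma iso3 : HL_iso_H br 2.
Proof.
exists phi3; split.
- by move=> f /lcocP Hf; exact: G_cocycle.
- move=> a f g /lcocP Hf /lcocP Hg x.
  have E : forall u v, hF (fun y => a *: f y + g y) (T2 u v) = a *: hF f (T2 u v) + hF g (T2 u v).
    move=> u v; rewrite !hFE; apply: Lift_linq => y.
    by rewrite /qF WF_lin // opprD scalerN.
  by rewrite /phi3 [x]eta3 (LD2_ext E) /= [in RHS]scalerDr; zcancel.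
- move=> f /lcocP Hf [k [Hk E]].
  have Kb := (ml2P k).1 Hk.
  set k' : cochain V 2 := fun y => k y + hF f y.
  have Kb' : bilin k'.
    case: Kb => K1 K2; case: (hF_bilin f) => L1 L2.
    by split=> a u v w; rewrite /k' /= ?K1 ?L1 ?K2 ?L2 scalerDr; zcancel.
  have Pk x : phi3 f x = leib_d br k' x.
    by rewrite /phi3 E [x]eta3 LD2_add.
  have K0 : forall a, k' (T2 a a) = 0.
    move=> a; apply: center_free => z.
    by rewrite -(LD2_diag Kb') -Pk G_diag.
  exists k'; split; first by split; [exact/ml2P | exact/alt2P].
  by move=> x; rewrite Pk [x]eta3 LD2_CE2.
- move=> f /lcocP Hf [k [[Hk Ha] E]].
  have Kb := (ml2P k).1 Hk; have K0 := (alt2P k).1 Ha.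
  exists (fun y => k y - hF f y); split.
    apply/ml2P; case: Kb => K1 K2; case: (hF_bilin f) => L1 L2.
    by split=> a u v w; rewrite /= ?K1 ?L1 ?K2 ?L2 scalerDr scalerN; zcancel.
  move=> x; rewrite [x]eta3.
  have E2 : forall u v, (fun y => k y - hF f y) (T2 u v) = (-1) *: hF f (T2 u v) + k (T2 u v).
    by move=> u v /=; rewrite scaleN1r addrC.
  rewrite (@LD2_ext (fun y => k y - hF f y) (hF f) k (-1) E2) (LD2_CE2 Kb K0) -E /phi3 scaleN1r; zcancel.
- move=> g [[Hm Ha] Hc].
  have Ht := (ml3P g).1 Hm.
  have Hl : lcoc g by split=> // a b c d; rewrite LD3_CE3 //; apply: Hc.
  have [G1 _ _] := (alt3P g).1 Ha.
  exists g; split; first by split=> // x; rewrite [x]eta4; apply: Hl.2.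
  exists (fun _ => 0); split; first split.
  + by apply/ml2P; split=> *; rewrite scaler0 addr0.
  + by apply/alt2P.
  move=> x; rewrite [x]eta3 CE2 /phi3 LD2 !(hF0 Hl G1) !br0r !br0l; zcancel.
Qed.

End Lie.

Theorem corollary2p9 (K : fieldType) (V : lmodType K) (br : V -> V -> V) :
  is_lie_bracket br -> complete_lie br ->
  HL_iso_H br 1 /\ HL_iso_H br 2.
Proof. by move=> HL HC; split; [exact: iso2 | exact: iso3]. Qed.
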